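(* For any choice of almost disjoint family and enumeration in the definition of $\rho^{[0,1]}$, we have $\rho^{[0,1]}\leq_K\rho_{\mathrm{conv}}$ and $\rho_{\mathrm{conv}}\not\leq_K\rho^{[0,1]}$.
   Context: $\mathrm{conv}$ is the ideal on $\mathbb{Q}\cap[0,1]$ of all sets covered by the ranges of finitely many sequences in $\mathbb{Q}\cap[0,1]$ convergent in $[0,1]$; $\mathrm{conv}^+$ is its complement in $\mathcal{P}(\mathbb{Q}\cap[0,1])$. $\rho_{\mathrm{conv}}\colon\mathrm{conv}^+\to[\mathbb{Q}\cap[0,1]]^\omega$ is $\rho_{\mathrm{conv}}(A)=A$ (domain sets are subsets of $\Omega=\mathbb{Q}\cap[0,1]$). Definition of $\rho^{[0,1]}$: let $\mathcal{A}=\{A_\alpha:\alpha<\mathfrak{c}\}$ be an almost disjoint family on $\omega$ (pairwise distinct infinite subsets with pairwise finite intersections). Let $X$ be the set of all $x\colon\omega\times\omega\to[0,1]\cap\mathbb{Q}$ such that: (i) for every $p\in[0,1]$ there is an open neighborhood $U$ of $p$ with $x[(\omega\setminus[0,n])\times\omega]\not\subseteq U$ for all $n$; (ii) $x$ is injective; (iii) $x[(\omega\setminus[0,n])\times\omega]\notin\mathrm{conv}$ for all $n$. Fix an enumeration $X=\{x_\alpha:\alpha<\mathfrak{c}\}$. Let $\overline{\mathcal{A}}=\{A\setminus K:A\in\mathcal{A},K\in[\omega]^{<\omega}\}$ and $\rho^{[0,1]}\colon\overline{\mathcal{A}}\to[[0,1]\cap\mathbb{Q}]^\omega$, $\rho^{[0,1]}(A_\alpha\setminus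 K)=x_\alpha[(\omega\setminus[0,\max(A_\alpha\cap K)])\times\omega]$, with $\max\emptyset=0$; here $[0,m]=\{0,\dots,m\}$ (domain sets are subsets of $\Omega=\omega$). Katětov order: for $\rho_i\colon\mathcal{F}_i\to[\Lambda_i]^\omega$ with $\mathcal{F}_i\subseteq[\Omega_i]^\omega$, $\rho_2\leq_K\rho_1$ if there is $f\colon\Lambda_1\to\Lambda_2$ such that for every $F_1\in\mathcal{F}_1$ there is $F_2\in\mathcal{F}_2$ such that for every finite $K_1\subseteq\Omega_1$ there is a finite $K_2\subseteq\Omega_2$ with $\rho_2(F_2\setminus K_2)\subseteq f[\rho_1(F_1\setminus K_1)]$. *)

(* Defs.v *)
From Stdlib Require Import Reals Qreals List ClassicalEpsilon.
Open Scope R_scope.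

Definition set (T : Type) := T -> Prop.
Definition setminus {T} (A K : set T) : set T := fun x => A x /\ ~ K x.
Definition finite {T} (K : set T) : Prop := exists l : list T, forall x, K x -> In x l.
Definition infinite {T} (K : set T) : Prop := ~ finite K.

Definition Q01 : Type := {r : R | 0 <= r <= 1 /\ exists q : Q, r = Q2R q}.

Definition conv (A : set Q01) : Prop :=
  exists ss : list (nat -> Q01),
    (forall s, In s ss -> exists L, 0 <= L <= 1 /\ Un_cv (fun n => proj1_sig (s n)) L) /\
    (forall q, A q -> exists s, In s ss /\ exists n, s n = q).

Definition conv_plus (A : set Q01) : Prop := ~ conv A.

Definition rho_conv (A : set Q01) : set Q01 := A.

(* Katetov order: Kle F2 rho2 F1 rho1  means  rho2 <=_K rho1, where
   rho_i : F_i -> [Lambda_i]^omega, F_i a family of subsets of Omega_i. *)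
Definition Kle {O2 L2 O1 L1 : Type}
  (F2 : set (set O2)) (rho2 : set O2 -> set L2)
  (F1 : set (set O1)) (rho1 : set O1 -> set L1) : Prop :=
  exists f : L1 -> L2,
    forall A1, F1 A1 ->
      exists A2, F2 A2 /\
        forall K1 : set O1, finite K1 ->
          exists K2 : set O2, finite K2 /\
            forall y, rho2 (setminus A2 K2) y ->
              exists z, rho1 (setminus A1 K1) z /\ f z = y.

Definition tail_image (x : nat * nat -> Q01) (n : nat) : set Q01 :=
  fun q => exists m j, (n < m)%nat /\ x (m, j) = q.

Definition in_X (x : nat * nat -> Q01) : Prop :=
  (forall p : R, 0 <= p <= 1 ->
     exists U : R -> Prop, open_set U /\ U p /\
       forall n : nat, ~ (forall q, tail_image x n q -> U (proj1_sig q))) /\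
  (forall a b, x a = x b -> a = b) /\
  (forall n : nat, ~ conv (tail_image x n)).

(* Almost disjoint family {A_alpha : alpha < c}, indexed by R (a set of size c) *)
Definition almost_disjoint_family (A : R -> set nat) : Prop :=
  (forall a, infinite (A a)) /\
  (forall a b, a <> b -> A a <> A b) /\
  (forall a b, a <> b -> finite (fun n => A a n /\ A b n)).

(* Enumeration X = {x_alpha : alpha < c}, indexed by R: a bijection R -> X *)
Definition enumeration_of_X (x : R -> (nat * nat -> Q01)) : Prop :=
  (forall a, in_X (x a)) /\
  (forall y, in_X y -> exists a, x a = y) /\
  (forall a b, x a = x b -> a = b).

Definition Abar (A : R -> set nat) : set (set nat) :=
  fun B => exists a (K : set nat), finite K /\ forall n, B n <-> (A a n /\ ~ K n).

(* n is in omega \ [0, max S], with max emptyset = 0, i.e. n > max S *)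
Definition above_max (S : set nat) (n : nat) : Prop :=
  (0 < n)%nat /\ forall k, S k -> (k < n)%nat.

(* rho^{[0,1]}(A_alpha \ K) = x_alpha[(omega \ [0, max(A_alpha ∩ K)]) x omega].
   The representation (alpha, K) of B is chosen by Hilbert's epsilon; the value
   does not depend on that choice. *)
Definition rep_of (A : R -> set nat) (B : set nat) : R * set nat :=
  epsilon (inhabits (0, fun _ : nat => False))
    (fun p => finite (snd p) /\ forall n, B n <-> (A (fst p) n /\ ~ snd p n)).

Definition rho01 (A : R -> set nat) (x : R -> (nat * nat -> Q01)) (B : set nat) : set Q01 :=
  let p := rep_of A B in
  fun q => exists m j,
    above_max (fun k => A (fst p) k /\ snd p k) m /\ x (fst p) (m, j) = q.

(* Main.v *)
Require Import Defs.
From Stdlib Require Import Reals Qreals List ClassicalEpsilon.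
From Stdlib Require Import ZArith Reals Qreals List ClassicalEpsilon Lra Lia Classical Cantor ProofIrrelevance.
Open Scope R_scope.

Ltac rabs := unfold Rabs in *; repeat match goal with
  | |- context[Rcase_abs ?x] => destruct (Rcase_abs x)
  | H : context[Rcase_abs ?x] |- _ => destruct (Rcase_abs x) end; lra.

Lemma Q01_eq (p q : Q01) : proj1_sig p = proj1_sig q -> p = q.
Proof. destruct p, q; simpl; intros ->. f_equal. apply proof_irrelevance. Qed.

Fixpoint histF {T : Type} (F : nat -> list T -> T) (n : nat) : list T :=
  match n with O => nil | S k => histF F k ++ (F k (histF F k) :: nil) end.

Lemma hist_choice {T : Type} (P : nat -> T -> Prop) :
  (forall n (l : list T), exists t, P n t /\ ~ In t l) ->
  exists u : nat -> T, (forall n, P n (u n)) /\ (forall i j, u i = u j -> i = j).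
Proof.
  intros H.
  set (F := fun n l => proj1_sig (constructive_indefinite_description _ (H n l))).
  assert (HF : forall n l, P n (F n l) /\ ~ In (F n l) l).
  { intros n l. unfold F. destruct (constructive_indefinite_description _ _) as [t Ht]. exact Ht. }
  exists (fun n => F n (histF F n)). split.
  - intros n. apply HF.
  - assert (Hin : forall i j, (i < j)%nat -> In (F i (histF F i)) (histF F j)).
    { intros i j Hij. induction j. lia. simpl. apply in_or_app.
      destruct (Nat.eq_dec i j). subst. right; left; reflexivity. left; apply IHj; lia. }
    intros i j E. destruct (Nat.lt_total i j) as [h|[h|h]]; auto.
    + exfalso. apply (proj2 (HF j (histF F j))). rewrite <- E. apply Hin; auto.
    + exfalso. apply (proj2 (HF i (histF F i))). rewrite E. apply Hin; auto.
Qed.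

Lemma inj_avoid {T} (u : nat -> T) : (forall i j, u i = u j -> i = j) ->
  forall l : list T, exists K, forall k, (K <= k)%nat -> ~ In (u k) l.
Proof.
  intros Hu l. induction l as [|a l [K HK]].
  - exists 0%nat. intros k _ [].
  - destruct (classic (exists k0, u k0 = a)) as [[k0 Hk0]|Hn].
    + exists (Nat.max K (S k0)). intros k Hk [E|E].
      * subst a. apply Hu in E. lia.
      * apply (HK k); [lia|auto].
    + exists K. intros k Hk [E|E]. apply Hn; eauto. apply (HK k); auto.
Qed.

Lemma arch (eps : R) : 0 < eps -> exists N : nat, forall n, (N <= n)%nat -> / (INR n + 1) < eps.
Proof.
  intros He. destruct (archimed_cor1 eps He) as [N [HN HN0]].
  exists N. intros n Hn. apply le_INR in Hn. apply lt_0_INR in HN0.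
  eapply Rle_lt_trans; [|exact HN]. apply Rinv_le_contravar; lra.
Qed.

Lemma inv_le (m n : nat) : (n <= m)%nat -> / (INR m + 1) <= / (INR n + 1).
Proof. intros H. apply le_INR in H. pose proof (pos_INR n). apply Rinv_le_contravar; lra. Qed.

Lemma inv_pos (n : nat) : 0 < / (INR n + 1).
Proof. pose proof (pos_INR n). apply Rinv_0_lt_compat; lra. Qed.

Lemma ValAdh_ball u l : ValAdh u l -> forall eps, 0 < eps -> forall N, exists p, (N <= p)%nat /\ Rabs (u p - l) < eps.
Proof. intros H eps He N. apply (H (fun y => Rabs (y - l) < eps) N). exists (mkposreal eps He). intros y Hy; exact Hy. Qed.

Lemma cluster_avoid (u : nat -> Q01) (g : Q01 -> R) l0 :
  (forall i j, u i = u j -> i = j) -> ValAdh (fun n => g (u n)) l0 ->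
  forall eps, 0 < eps -> forall N (l : list Q01), exists p, (N <= p)%nat /\ Rabs (g (u p) - l0) < eps /\ ~ In (u p) l.
Proof.
  intros Hu H eps He N l. destruct (inj_avoid u Hu l) as [K HK].
  destruct (ValAdh_ball _ _ H eps He (Nat.max N K)) as [p [Hp1 Hp2]].
  exists p. split; [lia|split; auto]. apply HK; lia.
Qed.

Lemma cluster_01 u l : ValAdh u l -> (forall n, 0 <= u n <= 1) -> 0 <= l <= 1.
Proof. intros H Hu. split; apply Rnot_lt_le; intro Hl.
 - destruct (ValAdh_ball u l H (-l) ltac:(lra) 0) as [p [_ Hp]]. specialize (Hu p). apply Rabs_def2 in Hp. lra.
 - destruct (ValAdh_ball u l H (l-1) ltac:(lra) 0) as [p [_ Hp]]. specialize (Hu p). apply Rabs_def2 in Hp. lra.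
Qed.

Lemma BW01 u : (forall n, 0 <= u n <= 1) -> exists l, 0 <= l <= 1 /\ ValAdh u l.
Proof. intros Hu. destruct (Bolzano_Weierstrass u (fun c => 0 <= c <= 1) (compact_P3 0 1) Hu) as [l Hl].
  exists l; split; [eapply cluster_01; eauto| auto]. Qed.

Lemma Q01_bounds (q : Q01) : 0 <= proj1_sig q <= 1.
Proof. exact (proj1 (proj2_sig q)). Qed.

Lemma approx (t eps : R) : 0 <= t <= 1 -> 0 < eps -> exists q : Q01, Rabs (proj1_sig q - t) < eps.
Proof.
  intros Ht He. destruct (arch eps He) as [N HN]. specialize (HN N (le_n _)).
  set (M := INR N + 1). assert (HM : 0 < M) by (unfold M; pose proof (pos_INR N); lra).
  destruct (archimed (t * M)) as [H1 H2].
  set (z := (up (t * M) - 1)%Z).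
  assert (Hz1 : IZR z <= t * M) by (unfold z; rewrite minus_IZR; lra).
  assert (Hz2 : t * M < IZR z + 1) by (unfold z; rewrite minus_IZR; lra).
  assert (Hz0 : (0 <= z)%Z). { apply le_IZR. assert (-1 < IZR z) by nra. 
     assert (Hzz: (-1 < z)%Z) by (apply lt_IZR; exact H). apply IZR_le; lia. }
  apply IZR_le in Hz0.
  assert (HQ : Q2R (QArith_base.Qmake z (Pos.of_succ_nat N)) = IZR z / M).
  { unfold Q2R; simpl. rewrite Zpos_P_of_succ_nat, succ_IZR, <- INR_IZR_INZ. reflexivity. }
  assert (Hb : 0 <= IZR z / M <= 1).
  { split. unfold Rdiv; apply Rmult_le_pos; [lra| apply Rlt_le, Rinv_0_lt_compat; lra]. apply Rmult_le_reg_r with M; auto.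
    unfold Rdiv; rewrite Rmult_assoc, Rinv_l by lra. nra. }
  exists (exist _ (IZR z / M) (conj Hb (ex_intro _ _ (eq_sym HQ)))). simpl.
  assert (E : IZR z / M - t = (IZR z - t * M) / M) by (field; lra). rewrite E.
  unfold Rdiv. rewrite Rabs_mult, (Rabs_right (/ M)) by (apply Rle_ge, Rlt_le, Rinv_0_lt_compat; auto).
  eapply Rle_lt_trans; [|exact HN]. fold M.
  rewrite <- (Rmult_1_l (/ M)) at 2. apply Rmult_le_compat_r. apply Rlt_le, Rinv_0_lt_compat; auto.
  rabs.
Qed.

Lemma dist_listR (y : R) (L : list R) : exists d, 0 < d /\ forall l, In l L -> l <> y -> d <= Rabs (l - y).
Proof.
  induction L as [|a L [d [Hd HL]]].
  - exists 1; split; [lra| intros l []].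
  - destruct (Req_dec a y) as [E|E].
    + exists d; split; auto. intros l [<-|Hl] Hne; [congruence| auto].
    + exists (Rmin d (Rabs (a - y))). split.
      * apply Rmin_pos; auto. apply Rabs_pos_lt; lra.
      * intros l [<-|Hl] Hne. apply Rmin_r. eapply Rle_trans; [apply Rmin_l|auto].
Qed.

Lemma density (y : R) : 0 <= y <= 1 -> forall d, 0 < d -> forall l : list Q01,
  exists q : Q01, Rabs (proj1_sig q - y) < d /\ ~ In q l.
Proof.
  intros Hy d Hd l. destruct (dist_listR y (map (@proj1_sig _ _) l)) as [d1 [Hd1 H1]].
  set (e := Rmin d (Rmin d1 (1/2))).
  assert (He : 0 < e /\ e <= d /\ e <= d1 /\ e <= 1/2).
  { unfold e. repeat split. repeat apply Rmin_pos; lra. apply Rmin_l.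
    eapply Rle_trans; [apply Rmin_r|apply Rmin_l]. eapply Rle_trans; [apply Rmin_r|apply Rmin_r]. }
  set (t := if Rle_dec y (1/2) then y + e/2 else y - e/2).
  assert (Ht : 0 <= t <= 1 /\ Rabs (t - y) = e/2).
  { unfold t; destruct (Rle_dec y (1/2)); split; try lra; rabs. }
  destruct (approx t (e/4) (proj1 Ht) ltac:(lra)) as [q Hq].
  exists q. destruct Ht as [_ Ht]. split. rabs.
  intros Hin. assert (Hq2 : e/4 < Rabs (proj1_sig q - y) < 3*e/4) by rabs.
  assert (Hne : proj1_sig q <> y) by (intro E; rewrite E in Hq2; rewrite Rminus_diag, Rabs_R0 in Hq2; lra).
  specialize (H1 (proj1_sig q) (in_map _ _ _ Hin) Hne). lra.
Qed.

Lemma conv_seqs (ss : list (nat -> Q01)) :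
  (forall s, In s ss -> exists L, 0 <= L <= 1 /\ Un_cv (fun n => proj1_sig (s n)) L) ->
  exists Ls : list R, (forall l, In l Ls -> 0 <= l <= 1) /\
    forall eps, 0 < eps -> exists K : list Q01, forall s n, In s ss -> ~ In (s n) K ->
      exists l, In l Ls /\ Rabs (proj1_sig (s n) - l) < eps.
Proof.
  induction ss as [|s ss IH]; intros Hc.
  - exists nil. split. intros l []. intros eps _. exists nil. intros s n [].
  - destruct IH as [Ls [HL HK]]. { intros s' H'. apply Hc; right; auto. }
    destruct (Hc s (or_introl eq_refl)) as [L0 [HL0 Hcv]].
    exists (L0 :: Ls). split. { intros l [<-|H]; auto. }
    intros eps He. destruct (HK eps He) as [K HK']. destruct (Hcv eps He) as [N HN].
    exists (map s (seq 0 N) ++ K). intros s' n [<-|Hs] Hn.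
    + exists L0. split. left; auto. destruct (le_lt_dec N n) as [h|h].
      * apply HN. lia.
      * exfalso. apply Hn. apply in_or_app. left. apply in_map. apply in_seq. lia.
    + destruct (HK' s' n Hs) as [l [Hl1 Hl2]]. intro; apply Hn; apply in_or_app; right; auto.
      exists l; split; [right|]; auto.
Qed.

Lemma conv_concentrate (S : set Q01) : conv S ->
  exists Ls : list R, (forall l, In l Ls -> 0 <= l <= 1) /\
    forall eps, 0 < eps -> exists K : list Q01, forall q, S q -> ~ In q K ->
      exists l, In l Ls /\ Rabs (proj1_sig q - l) < eps.
Proof.
  intros [ss [Hc Hcov]]. destruct (conv_seqs ss Hc) as [Ls [HL HK]].
  exists Ls; split; auto. intros eps He. destruct (HK eps He) as [K HK'].
  exists K. intros q Hq HqK. destruct (Hcov q Hq) as [s [Hs [n <-]]]. apply HK'; auto.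
Qed.

Definition blk (Kf : nat -> list Q01) (fill : nat -> Q01) (l : R) (n : nat) : list Q01 :=
  filter (fun q => if Rlt_dec (Rabs (proj1_sig q - l) * INR n) 1 then true else false) (Kf n)
  ++ (fill n :: nil).

Definition bigl (b : nat -> list Q01) (N : nat) : list Q01 := flat_map b (seq 0 (S N)).

Lemma bigl_len b : (forall n, (1 <= length (b n))%nat) -> forall N, (S N <= length (bigl b N))%nat.
Proof.
  intros Hb N. unfold bigl. induction N.
  - simpl. rewrite app_nil_r. apply Hb.
  - rewrite seq_S, flat_map_app, length_app. cbn [flat_map]. rewrite app_nil_r. pose proof (Hb (0 + S N)%nat). lia.
Qed.

Lemma bigl_prefix b N k : bigl b (N + k) = bigl b N ++ flat_map b (seq (S N) k).
Proof. unfold bigl. replace (S (N + k)) with (S N + k)%nat by lia. rewrite seq_app, flat_map_app. reflexivity. Qed.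

Definition enum (b : nat -> list Q01) (d : Q01) (j : nat) : Q01 := nth j (bigl b j) d.

Lemma enum_cover b d : (forall n, (1 <= length (b n))%nat) ->
  forall n q, In q (b n) -> exists j, enum b d j = q.
Proof.
  intros Hb n q Hq. assert (Hq' : In q (bigl b n)).
  { unfold bigl. apply in_flat_map. exists n. split; auto. apply in_seq; lia. }
  destruct (In_nth _ _ d Hq') as [j [Hj Ej]]. exists j. unfold enum.
  destruct (le_lt_dec j n) as [h|h].
  - replace n with (j + (n - j))%nat in Ej by lia. rewrite bigl_prefix in Ej.
    rewrite app_nth1 in Ej; auto. pose proof (bigl_len b Hb j). lia.
  - replace j with (n + (j - n))%nat at 2 by lia. rewrite bigl_prefix. rewrite app_nth1; auto.
Qed.

Lemma enum_tail b d : (forall n, (1 <= length (b n))%nat) ->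
  forall N j, (length (bigl b N) <= j)%nat -> exists n, (N < n)%nat /\ In (enum b d j) (b n).
Proof.
  intros Hb N j Hj. pose proof (bigl_len b Hb N) as HN.
  unfold enum. assert (E : bigl b j = bigl b N ++ flat_map b (seq (S N) (j - N))) by (rewrite <- bigl_prefix; f_equal; lia). rewrite E.
  rewrite app_nth2 by lia.
  assert (Hlt : (j - length (bigl b N) < length (flat_map b (seq (S N) (j - N))))%nat).
  { pose proof (bigl_len b Hb j) as Hj2. replace j with (N + (j - N))%nat in Hj2 at 2 by lia.
    rewrite bigl_prefix, length_app in Hj2. lia. }
  pose proof (nth_In _ d Hlt) as Hin. apply in_flat_map in Hin. destruct Hin as [n [Hn1 Hn2]].
  apply in_seq in Hn1. exists n. split; [lia|auto].
Qed.

Lemma conc_conv (S0 : set Q01) (Ls : list R) : (forall l, In l Ls -> 0 <= l <= 1) ->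
  (forall n : nat, exists K : list Q01, forall q, S0 q -> ~ In q K ->
      exists l, In l Ls /\ Rabs (proj1_sig q - l) < / (INR n + 1)) -> conv S0.
Proof.
  intros HL H.
  set (Kf := fun n => proj1_sig (constructive_indefinite_description _ (H n))).
  assert (HKf : forall n q, S0 q -> ~ In q (Kf n) -> exists l, In l Ls /\ Rabs (proj1_sig q - l) < / (INR n + 1)).
  { intros n. unfold Kf. destruct (constructive_indefinite_description _ _) as [K HK]. exact HK. }
  assert (Hfill : forall l n, exists q : Q01, (0 <= l <= 1 -> Rabs (proj1_sig q - l) < / (INR n + 1)) /\
             ((exists q0 : Q01, proj1_sig q0 = l) -> proj1_sig q = l)).
  { intros l n. destruct (classic (exists q0 : Q01, proj1_sig q0 = l)) as [[q0 Hq0]|Hn].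
    - exists q0. split; [|auto]. intros _. rewrite Hq0, Rminus_diag, Rabs_R0. apply inv_pos.
    - destruct (classic (0 <= l <= 1)) as [Hl|Hl].
      + destruct (approx l _ Hl (inv_pos n)) as [q Hq]. exists q; split; auto. intros; contradiction.
      + destruct (approx 0 1 ltac:(lra) ltac:(lra)) as [q _]. exists q; split; intros; contradiction. }
  set (fill := fun l n => proj1_sig (constructive_indefinite_description _ (Hfill l n))).
  assert (HF : forall l n, (0 <= l <= 1 -> Rabs (proj1_sig (fill l n) - l) < / (INR n + 1)) /\
             ((exists q0 : Q01, proj1_sig q0 = l) -> proj1_sig (fill l n) = l)).
  { intros l n. unfold fill. destruct (constructive_indefinite_description _ _) as [q Hq]. exact Hq. }
  set (b := fun l => blk Kf (fill l) l).
  assert (Hb : forall l n, (1 <= length (b l n))%nat).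
  { intros l n. unfold b, blk. rewrite length_app. simpl. lia. }
  assert (Hbound : forall l n q, 0 <= l <= 1 -> (1 <= n)%nat -> In q (b l n) -> Rabs (proj1_sig q - l) < / INR n).
  { intros l n q Hl Hn Hq. assert (Hn' : 1 <= INR n) by (apply (le_INR 1); auto).
    unfold b, blk in Hq. apply in_app_or in Hq. destruct Hq as [Hq|[<-|[]]].
    - apply filter_In in Hq. destruct Hq as [_ Hq].
      destruct (Rlt_dec (Rabs (proj1_sig q - l) * INR n) 1) as [h|h]; [|discriminate].
      apply Rmult_lt_reg_r with (INR n); [lra|]. rewrite Rinv_l by lra. exact h.
    - eapply Rlt_le_trans. apply (proj1 (HF l n) Hl). apply Rinv_le_contravar; lra. }
  set (seqf := fun l => enum (b l) (fill l 0%nat)).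
  assert (Hcv : forall l, 0 <= l <= 1 -> Un_cv (fun j => proj1_sig (seqf l j)) l).
  { intros l Hl eps He. destruct (arch eps He) as [N HN].
    exists (length (bigl (b l) N)). intros j Hj. unfold R_dist.
    destruct (enum_tail (b l) (fill l 0%nat) (Hb l) N j Hj) as [n [Hn1 Hn2]].
    eapply Rlt_le_trans. apply (Hbound l n); auto; lia.
    eapply Rle_trans; [|apply Rlt_le, (HN N); lia].
    apply Rinv_le_contravar. pose proof (pos_INR N); lra.
    replace n with (S (N + (n - S N)))%nat by lia. rewrite S_INR, plus_INR. pose proof (pos_INR (n - S N)); lra. }
  assert (Hleast : forall q : Q01, forall n, ~ (exists l, In l Ls /\ Rabs (proj1_sig q - l) < / (INR n + 1)) ->
     exists n1, ~ (exists l, In l Ls /\ Rabs (proj1_sig q - l) < / (INR n1 + 1)) /\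
       (n1 = 0%nat \/ exists k, n1 = S k /\ exists l, In l Ls /\ Rabs (proj1_sig q - l) < / (INR k + 1))).
  { intros q n. induction n as [|k IH]; intros Hn.
    - exists 0%nat; split; auto.
    - destruct (classic (exists l, In l Ls /\ Rabs (proj1_sig q - l) < / (INR k + 1))) as [h|h].
      + exists (S k). split; auto. right. exists k; split; auto.
      + apply IH; auto. }
  exists (map seqf Ls ++ map (fun q => fun _ : nat => q) (Kf 0%nat)). split.
  - intros s Hs. apply in_app_or in Hs. destruct Hs as [Hs|Hs]; apply in_map_iff in Hs; destruct Hs as [z [<- Hz]].
    + exists z. split; auto.
    + exists (proj1_sig z). split. apply Q01_bounds. intros eps He. exists 0%nat. intros. unfold R_dist.
      rewrite Rminus_diag, Rabs_R0; lra.
  - intros q Hq. destruct (classic (exists l, In l Ls /\ proj1_sig q = l)) as [[l [Hl Eq]]|Hnl].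
    + exists (seqf l). split. apply in_or_app; left; apply in_map; auto.
      assert (Ef : fill l 0%nat = q) by (apply Q01_eq; rewrite (proj2 (HF l 0%nat)); eauto).
      apply (enum_cover (b l) (fill l 0%nat) (Hb l) 0%nat). unfold b, blk. apply in_or_app. right. left. auto.
    + destruct (dist_listR (proj1_sig q) Ls) as [d [Hd Hdl]].
      destruct (arch d Hd) as [N0 HN0].
      assert (Hnot : ~ (exists l, In l Ls /\ Rabs (proj1_sig q - l) < / (INR N0 + 1))).
      { intros [l [Hl Hl2]]. assert (l <> proj1_sig q) by (intro E; apply Hnl; eauto).
        specialize (Hdl l Hl H0). specialize (HN0 N0 (le_n _)). rewrite Rabs_minus_sym in Hl2. lra. }
      destruct (Hleast q N0 Hnot) as [n1 [Hn1 Hn1']].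
      assert (HinK : In q (Kf n1)) by (apply NNPP; intro Hc; apply Hn1; apply HKf; auto).
      destruct Hn1' as [->|[k [-> [l [Hl Hlk]]]]].
      * exists (fun _ => q). split; [apply in_or_app; right; apply (in_map (fun (q : Q01) (_ : nat) => q)); auto| exists 0%nat; auto].
      * exists (seqf l). split. apply in_or_app; left; apply in_map; auto.
        apply (enum_cover (b l) (fill l 0%nat) (Hb l) (S k)). unfold b, blk. apply in_or_app. left.
        apply filter_In. split; auto.
        destruct (Rlt_dec (Rabs (proj1_sig q - l) * INR (S k)) 1) as [h|h]; auto. exfalso. apply h.
        rewrite S_INR. pose proof (pos_INR k).
        apply Rmult_lt_reg_r with (/ (INR k + 1)). apply inv_pos.
        rewrite Rmult_assoc, Rinv_r, Rmult_1_r, Rmult_1_l by lra. exact Hlk.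
Qed.

Definition accp (S : set Q01) (a : R) : Prop :=
  forall d, 0 < d -> forall l : list Q01, exists q, S q /\ Rabs (proj1_sig q - a) < d /\ ~ In q l.

Lemma many_acc S : ~ conv S -> forall L : list R, exists a, accp S a /\ ~ In a L.
Proof.
  intros Hnc L. apply NNPP; intro Hall.
  assert (Hall' : forall a, accp S a -> In a L) by (intros a Ha; apply NNPP; intro; apply Hall; eauto).
  apply Hnc.
  set (Ls := filter (fun l => if Rle_dec 0 l then if Rle_dec l 1 then true else false else false) L).
  apply conc_conv with Ls.
  - intros l Hl. apply filter_In in Hl. destruct Hl as [_ Hl].
    destruct (Rle_dec 0 l); destruct (Rle_dec l 1); try discriminate; lra.
  - intros n. apply NNPP; intro Hn.
    assert (Hinf : forall (k : nat) (l : list Q01), exists q, (S q /\ forall l0, In l0 Ls -> / (INR n + 1) <= Rabs (proj1_sig q - l0)) /\ ~ In q l).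
    { intros _ l. apply NNPP; intro Hc. apply Hn. exists l. intros q Hq Hql. apply NNPP; intro Hfar.
      apply Hc. exists q. split; [split|]; auto. intros l0 Hl0. apply Rnot_lt_le. intro; apply Hfar; eauto. }
    destruct (hist_choice _ Hinf) as [u [Hu Huinj]].
    destruct (BW01 (fun k => proj1_sig (u k)) (fun k => Q01_bounds (u k))) as [a [Ha01 Ha]].
    assert (Hacc : accp S a).
    { intros d Hd l. destruct (cluster_avoid u (@proj1_sig _ _) a Huinj Ha d Hd 0 l) as [p [_ [Hp1 Hp2]]].
      exists (u p). split; [apply Hu| auto]. }
    assert (HaL : In a Ls).
    { apply filter_In; split; [apply Hall'; auto|]. destruct (Rle_dec 0 a); destruct (Rle_dec a 1); auto; lra. }
    destruct (ValAdh_ball _ _ Ha _ (inv_pos n) 0) as [p [_ Hp]].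
    pose proof (proj2 (Hu p) a HaL). simpl in Hp. lra.
Qed.

Lemma buildX (Pm : nat -> set Q01) (a : nat -> R) :
  (forall m, accp (Pm m) (a m)) ->
  (forall n (L : list R), exists m, (n < m)%nat /\ ~ In (a m) L) ->
  (exists d, 0 < d /\ forall n, exists m1 m2, (n < m1)%nat /\ (n < m2)%nat /\ d <= Rabs (a m1 - a m2)) ->
  exists x0, in_X x0 /\ forall m j, Pm m (x0 (m, j)).
Proof.
  intros H1 H2 [d [Hd H3]].
  set (P := fun k t => Pm (fst (of_nat k)) t /\ Rabs (proj1_sig t - a (fst (of_nat k))) < / (INR (snd (of_nat k)) + 1)).
  assert (HP : forall k (l : list Q01), exists t, P k t /\ ~ In t l).
  { intros k l. destruct (H1 (fst (of_nat k)) _ (inv_pos (snd (of_nat k))) l) as [q [Hq1 [Hq2 Hq3]]].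
    exists q. split; [split|]; auto. }
  destruct (hist_choice P HP) as [y [Hy Hyinj]].
  set (x0 := fun p : nat * nat => y (to_nat p)).
  assert (Hx : forall m j, Pm m (x0 (m,j)) /\ Rabs (proj1_sig (x0 (m,j)) - a m) < / (INR j + 1)).
  { intros m j. unfold x0. pose proof (Hy (to_nat (m,j))) as Hh. unfold P in Hh. rewrite cancel_of_to in Hh. exact Hh. }
  assert (Hinj : forall p1 p2, x0 p1 = x0 p2 -> p1 = p2).
  { intros p1 p2 E. apply Hyinj in E. rewrite <- (cancel_of_to p1), <- (cancel_of_to p2), E. reflexivity. }
  exists x0. split; [|intros; apply Hx].
  split; [|split].
  - intros p Hp. exists (fun r => Rabs (r - p) < d / 4). split; [|split].
    + intros r Hr. assert (Hpos : 0 < d/4 - Rabs (r - p)) by lra.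
      exists (mkposreal _ Hpos). intros z Hz. unfold disc in Hz; simpl in Hz. rabs.
    + simpl. rewrite Rminus_diag, Rabs_R0. lra.
    + intros n Hall. destruct (H3 n) as [m1 [m2 [Hm1 [Hm2 Hdm]]]].
      destruct (arch (d/4) ltac:(lra)) as [J HJ]. specialize (HJ J (le_n _)).
      pose proof (proj2 (Hx m1 J)) as E1. pose proof (proj2 (Hx m2 J)) as E2.
      assert (T1 : Rabs (proj1_sig (x0 (m1,J)) - p) < d/4) by (apply Hall; exists m1, J; auto).
      assert (T2 : Rabs (proj1_sig (x0 (m2,J)) - p) < d/4) by (apply Hall; exists m2, J; auto).
      set (e := / (INR J + 1)) in *. clearbody e.
      set (u1 := proj1_sig (x0 (m1,J))) in *. set (u2 := proj1_sig (x0 (m2,J))) in *.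
      clear - Hdm E1 E2 T1 T2 HJ. rabs.
  - exact Hinj.
  - intros n Hc. destruct (conv_concentrate _ Hc) as [Ls [_ HK]].
    destruct (H2 n Ls) as [m [Hm HmL]].
    destruct (dist_listR (a m) Ls) as [dl [Hdl Hdl2]].
    destruct (HK (dl/2) ltac:(lra)) as [K HKK].
    destruct (arch (dl/2) ltac:(lra)) as [J HJ].
    assert (Hg : forall i j, x0 (m, (J + i)%nat) = x0 (m, (J + j)%nat) -> i = j).
    { intros i j E. apply Hinj in E. injection E. lia. }
    destruct (inj_avoid _ Hg K) as [K0 HK0].
    destruct (HKK (x0 (m, (J + K0)%nat))) as [l [Hl Hl2]].
    { exists m, (J + K0)%nat. auto. }
    { apply HK0; auto. }
    assert (Hne : l <> a m) by (intro E; apply HmL; rewrite <- E; auto).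
    specialize (Hdl2 l Hl Hne). pose proof (proj2 (Hx m (J + K0)%nat)) as E1.
    specialize (HJ (J + K0)%nat ltac:(lia)).
    set (e := / (INR (J + K0) + 1)) in *. clearbody e.
    set (u1 := proj1_sig (x0 (m, (J + K0)%nat))) in *.
    clear - Hdl2 E1 HJ Hl2. rabs.
Qed.

Lemma tail_avoid (x0 : nat * nat -> Q01) : (forall p1 p2, x0 p1 = x0 p2 -> p1 = p2) ->
  forall l : list Q01, exists n, forall m j, (n < m)%nat -> ~ In (x0 (m,j)) l.
Proof.
  intros Hinj l. induction l as [|a l [n Hn]].
  - exists 0%nat. intros m j _ [].
  - destruct (classic (exists p, x0 p = a)) as [[p Hp]|Hnp].
    + exists (Nat.max n (fst p)). intros m j Hm [E|E].
      * rewrite <- Hp in E. apply Hinj in E. subst p. simpl in Hm. lia.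
      * apply (Hn m j); [lia|auto].
    + exists n. intros m j Hm [E|E]. apply Hnp; eauto. apply (Hn m j); auto.
Qed.

Lemma rho01_char (A : R -> set nat) (x : R -> (nat * nat -> Q01)) al (K B : set nat) :
  almost_disjoint_family A -> finite K -> (forall n, B n <-> A al n /\ ~ K n) ->
  forall y, rho01 A x B y -> exists m j, above_max (fun k => A al k /\ K k) m /\ x al (m,j) = y.
Proof.
  intros [HAinf [_ HAd]] HK HB y Hy. unfold rho01 in Hy. cbv zeta in Hy.
  assert (Hp : finite (snd (rep_of A B)) /\ forall n, B n <-> (A (fst (rep_of A B)) n /\ ~ snd (rep_of A B) n)).
  { unfold rep_of. apply epsilon_spec. exists (al, K). simpl. auto. }
  destruct (rep_of A B) as [be K'] eqn:Erep. simpl in *. destruct Hp as [HK' HB'].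
  assert (Hbe : be = al).
  { apply NNPP; intro Hne. destruct (HAd al be (fun E => Hne (eq_sym E))) as [lI HI].
    destruct HK as [lK HlK]. apply (HAinf al). exists (lI ++ lK). intros n Hn. apply in_or_app.
    destruct (classic (K n)) as [Kn|Kn]; [right; auto|left].
    apply HI. split; auto. apply (proj1 (HB' n)). apply HB. auto. }
  subst be. destruct Hy as [m [j [Ham Hx]]]. exists m, j. split; auto.
  destruct Ham as [Hm0 Hm]. split; auto. intros k [Hk1 Hk2]. apply Hm. split; auto.
  apply NNPP; intro Hc. assert (B k) by (apply HB'; auto). apply HB in H. tauto.
Qed.

Lemma fun_choice {T : Type} (P : nat -> T -> Prop) : (forall k, exists c, P k c) -> exists g, forall k, P k (g k).
Proof. intros H. exists (fun k => proj1_sig (constructive_indefinite_description _ (H k))).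
  intros k. destruct (constructive_indefinite_description _ _) as [c Hc]; exact Hc. Qed.

Lemma par_even i : Nat.odd (2*i) = false /\ Nat.div2 (2*i) = i.
Proof. split. apply Nat.odd_even. apply Nat.div2_double. Qed.
Lemma par_odd i : Nat.odd (2*i+1) = true /\ Nat.div2 (2*i+1) = i.
Proof. split. apply Nat.odd_odd. rewrite Nat.add_1_r. apply Nat.div2_succ_double. Qed.

Lemma part1_x (A1 : set Q01) : ~ conv A1 -> exists x0, in_X x0 /\ forall m j, A1 (x0 (m, j)).
Proof.
  intros Hnc. destruct (hist_choice (fun _ a => accp A1 a)) as [g [Hg Hginj]].
  { intros _ L. apply many_acc; auto. }
  set (a := fun m => if Nat.odd m then g m else if Nat.odd (Nat.div2 m) then g 1%nat else g 0%nat).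
  destruct (buildX (fun _ => A1) a) as [x0 [HX Hx]].
  - intros m. unfold a. destruct (Nat.odd m); [|destruct (Nat.odd (Nat.div2 m))]; apply Hg.
  - intros n L. destruct (inj_avoid g Hginj L) as [K HK].
    exists (2 * Nat.max n K + 1)%nat. split; [lia|]. unfold a.
    destruct (par_odd (Nat.max n K)) as [-> _]. apply HK. lia.
  - exists (Rabs (g 0%nat - g 1%nat)). split.
    + apply Rabs_pos_lt. intro E. assert (g 0%nat = g 1%nat) by lra. apply Hginj in H. discriminate.
    + intros n. exists (2 * (2 * S n))%nat, (2 * (2 * S n + 1))%nat. split; [lia|split;[lia|]].
      unfold a. destruct (par_even (2 * S n)) as [-> ->]. destruct (par_even (2 * S n + 1)) as [-> ->].
      destruct (par_even (S n)) as [-> _]. destruct (par_odd (S n)) as [-> _]. lra.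
  - exists x0. auto.
Qed.

Lemma cluster_pt (F : Q01 -> R) : (forall q, 0 <= F q <= 1) -> forall y, 0 <= y <= 1 ->
  exists c, 0 <= c <= 1 /\ forall d, 0 < d -> forall e, 0 < e -> forall l : list Q01,
    exists q, Rabs (proj1_sig q - y) < d /\ Rabs (F q - c) < e /\ ~ In q l.
Proof.
  intros HF y Hy. destruct (hist_choice (fun j (t : Q01) => Rabs (proj1_sig t - y) < / (INR j + 1))) as [s [Hs Hsinj]].
  { intros j l. apply density; auto. apply inv_pos. }
  destruct (BW01 (fun k => F (s k)) (fun k => HF (s k))) as [c [Hc HcV]].
  exists c. split; auto. intros d Hd e He l. destruct (arch d Hd) as [N HN].
  destruct (cluster_avoid s F c Hsinj HcV e He N l) as [p [Hp1 [Hp2 Hp3]]].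
  exists (s p). split; [|split]; auto. eapply Rlt_trans. apply Hs. apply HN; auto.
Qed.

Lemma part2_x (f : Q01 -> Q01) : exists x0 (Ls : list R), (forall l, In l Ls -> 0 <= l <= 1) /\ in_X x0 /\
  forall m j, exists l, In l Ls /\ Rabs (proj1_sig (f (x0 (m, j))) - l) < / (INR m + 1).
Proof.
  set (F := fun q => proj1_sig (f q)).
  assert (HF : forall q, 0 <= F q <= 1) by (intros; apply Q01_bounds).
  set (yE := fun k : nat => / (INR k + 4)).
  set (yO := fun k : nat => 1 - / (INR k + 4)).
  assert (HyE : forall k, 0 <= yE k <= 1/4).
  { intros k. unfold yE. pose proof (pos_INR k). split. apply Rlt_le, Rinv_0_lt_compat; lra.
    replace (1/4) with (/4) by lra. apply Rinv_le_contravar; lra. }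
  assert (HyO : forall k, 3/4 <= yO k <= 1) by (intros k; pose proof (HyE k); unfold yO; unfold yE in *; lra).
  destruct (fun_choice _ (fun k => cluster_pt F HF (yE k) ltac:(pose proof (HyE k); lra))) as [cEk HcEk].
  destruct (fun_choice _ (fun k => cluster_pt F HF (yO k) ltac:(pose proof (HyO k); lra))) as [cOk HcOk].
  destruct (BW01 cEk (fun k => proj1 (HcEk k))) as [cE [HcE HcEV]].
  destruct (BW01 cOk (fun k => proj1 (HcOk k))) as [cO [HcO HcOV]].
  assert (Hpos : forall m : nat, 0 < / (INR m + 1) / 2) by (intros; pose proof (inv_pos m); lra).
  destruct (fun_choice (fun i p => (i <= p)%nat /\ Rabs (cEk p - cE) < / (INR (2*i) + 1) / 2)) as [kE HkE].
  { intros i. destruct (ValAdh_ball _ _ HcEV _ (Hpos (2*i)%nat) i) as [p Hp]. eauto. }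
  destruct (fun_choice (fun i p => (i <= p)%nat /\ Rabs (cOk p - cO) < / (INR (2*i+1) + 1) / 2)) as [kO HkO].
  { intros i. destruct (ValAdh_ball _ _ HcOV _ (Hpos (2*i+1)%nat) i) as [p Hp]. eauto. }
  set (a := fun m => if Nat.odd m then yO (kO (Nat.div2 m)) else yE (kE (Nat.div2 m))).
  set (Ls := cE :: cO :: nil).
  destruct (buildX (fun m q => exists l, In l Ls /\ Rabs (F q - l) < / (INR m + 1)) a) as [x0 [HX Hx]].
  - intros m. destruct (Nat.Even_or_Odd m) as [[i ->]|[i ->]]; unfold a.
    + destruct (par_even i) as [-> ->]. intros d Hd l.
      destruct (proj2 (HcEk (kE i)) d Hd _ (Hpos (2*i)%nat) l) as [q [Hq1 [Hq2 Hq3]]].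
      exists q. split; [|split; auto]. exists cE. split. left; auto.
      pose proof (proj2 (HkE i)). set (e := / (INR (2 * i) + 1)) in *. clearbody e.
      set (u := F q) in *. clear - H Hq2. rabs.
    + destruct (par_odd i) as [-> ->]. intros d Hd l.
      destruct (proj2 (HcOk (kO i)) d Hd _ (Hpos (2*i+1)%nat) l) as [q [Hq1 [Hq2 Hq3]]].
      exists q. split; [|split; auto]. exists cO. split. right; left; auto.
      pose proof (proj2 (HkO i)). set (e := / (INR (2 * i + 1) + 1)) in *. clearbody e.
      set (u := F q) in *. clear - H Hq2. rabs.
  - intros n L.
    assert (Hinj : forall i j, yE i = yE j -> i = j).
    { intros i j E. unfold yE in E. apply Rinv_eq_reg in E. apply INR_eq. lra. }
    destruct (inj_avoid yE Hinj L) as [K HK].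
    exists (2 * S (Nat.max n K))%nat. split; [lia|]. unfold a.
    destruct (par_even (S (Nat.max n K))) as [-> ->]. apply HK.
    pose proof (proj1 (HkE (S (Nat.max n K)))). lia.
  - exists (1/2). split; [lra|]. intros n. exists (2 * S n)%nat, (2 * S n + 1)%nat.
    split; [lia|split;[lia|]]. unfold a.
    destruct (par_even (S n)) as [-> ->]. destruct (par_odd (S n)) as [-> ->].
    pose proof (HyE (kE (S n))). pose proof (HyO (kO (S n))). rabs.
  - exists x0, Ls. split; [|split; auto].
    intros l [<-|[<-|[]]]; auto.
Qed.

Lemma inf_ge (B : set nat) : infinite B -> forall n, exists e, B e /\ (n <= e)%nat.
Proof.
  intros Hinf n. apply NNPP; intro Hc. apply Hinf. exists (seq 0 n). intros k Hk.
  apply in_seq. destruct (le_lt_dec n k); [exfalso; apply Hc; eauto| lia].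
Qed.

Theorem theorem6p8 :
  forall (A : R -> set nat) (x : R -> (nat * nat -> Q01)),
    almost_disjoint_family A ->
    enumeration_of_X x ->
    Kle (Abar A) (rho01 A x) conv_plus rho_conv /\
    ~ Kle conv_plus rho_conv (Abar A) (rho01 A x).
Proof.
  intros A x HA [HxX [Hxsurj Hxinj]].
  assert (HAbar : forall al, Abar A (A al)).
  { intros al. exists al, (fun _ => False). split. exists nil; intros _ []. intros n; tauto. }
  assert (Hfin1 : forall e : nat, finite (fun k => k = e)).
  { intros e. exists (e :: nil). intros k ->; left; auto. }
  split.
  - exists (fun q : Q01 => q). intros A1 HA1.
    destruct (part1_x A1 HA1) as [x0 [HX0 Hx0]]. destruct (Hxsurj x0 HX0) as [al Hal].
    exists (A al). split; [apply HAbar|].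
    intros K1 [l1 Hl1]. destruct (tail_avoid x0 (proj1 (proj2 HX0)) l1) as [n Hn].
    destruct (inf_ge (A al) (proj1 HA al) (S n)) as [e [He1 He2]].
    exists (fun k => k = e). split; [apply Hfin1|].
    intros y Hy.
    destruct (rho01_char A x al (fun k => k = e) _ HA (Hfin1 e) (fun n => iff_refl _) y Hy) as [m [j [[_ Hm] Hxy]]].
    specialize (Hm e (conj He1 eq_refl)).
    exists y. split; [|reflexivity]. unfold rho_conv, setminus. rewrite <- Hxy, Hal. split.
    + apply Hx0.
    + intro HK1. apply (Hn m j); [lia| apply Hl1; auto].
  - intros [f Hf]. destruct (part2_x f) as [x0 [Ls [HLs [HX0 Hx0]]]]. destruct (Hxsurj x0 HX0) as [al Hal].
    destruct (Hf (A al) (HAbar al)) as [A2 [HA2 HK]]. apply HA2. apply conc_conv with Ls; auto.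
    intros n. destruct (inf_ge (A al) (proj1 HA al) n) as [e [He1 He2]].
    destruct (HK (fun k => k = e) (Hfin1 e)) as [K2 [[l2 Hl2] HK2]]. exists l2. intros q Hq Hql.
    destruct (HK2 q (conj Hq (fun h => Hql (Hl2 q h)))) as [z [Hz Hfz]].
    destruct (rho01_char A x al (fun k => k = e) _ HA (Hfin1 e) (fun n => iff_refl _) z Hz) as [m [j [[_ Hm] Hxz]]].
    specialize (Hm e (conj He1 eq_refl)).
    rewrite Hal in Hxz. destruct (Hx0 m j) as [l [Hl Hl']]. exists l. split; auto.
    rewrite <- Hfz, <- Hxz. eapply Rlt_le_trans; [exact Hl'| apply inv_le; lia].
Qed.
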